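(* Let $G$ be a finite group. Then the width of $G$ is equal to the number of conjugacy classes of meet-irreducible subgroups of $G$. Moreover, choosing one representative $I$ from each conjugacy class of meet-irreducible subgroups of $G$, the set of arrows $\{(I,G)\}$ so obtained is a minimal generating set for the complete transfer system of $G$.
   Context: For a finite group $G$, an arrow is a pair $(H,K)$ of subgroups with $H\leqslant K$; it is an identity arrow if $H=K$. A $G$-transfer system is a set $\mathsf{T}$ of arrows containing all identity arrows and closed under composition ($(H,K),(K,L)\in\mathsf{T}\Rightarrow(H,L)\in\mathsf{T}$), conjugation ($(H,K)\in\mathsf{T}\Rightarrow(gHg^{-1},gKg^{-1})\in\mathsf{T}$) and restriction ($(H,K)\in\mathsf{T}$, $L\leqslant K\Rightarrow(H\cap L,L)\in\mathsf{T}$). For a set $S$ of non-identity arrows, $\langle S\rangle$ is the smallest transfer system containing $S$. A minimal generating set of a transfer system $\mathsf{T}$ is a set $S\subseteq\mathsf{T}$ of non-identity arrows with $\langle S\rangle=\mathsf{T}$ and $\langle S\setminus\{s\}\rangle\neq\mathsf{T}$ for all $s\in S$; all minimal generating sets of $\mathsf{T}$ have the same cardinality, denoted $\mathfrak{m}(\mathsf{T})$. The complete transfer system of $G$ consists of all arrows, and the width of $G$ is $\mathfrak{m}$ of the complete transfer system. A subgroup $H\leqslant G$ is meet-irreducible if it is meet-irreducible in the subgroup lattice: $H\neq G$, and whenever $H=A\cap B$ for subgroups $A,B$, one has $H=A$ or $H=B$. *)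

(* Defs.v *)
From mathcomp Require Import all_boot all_fingroup.
Set Implicit Arguments. Unset Strict Implicit. Unset Printing Implicit Defensive.
Local Open Scope group_scope.

Section TransferSystems.
Variable gT : finGroupType.

Definition arrow := ({group gT} * {group gT})%type.

Definition is_transfer_system (G : {group gT}) (T : {set arrow}) : Prop :=
  [/\ (forall a : arrow, a \in T -> (a.1 \subset a.2) && (a.2 \subset G)),
      (forall H : {group gT}, H \subset G -> (H, H) \in T),
      (forall H K L : {group gT}, (H, K) \in T -> (K, L) \in T -> (H, L) \in T),
      (forall (H K : {group gT}) (g : gT), g \in G -> (H, K) \in T ->
          ((H :^ g)%G, (K :^ g)%G) \in T) &
      (forall H K L : {group gT}, (H, K) \in T -> L \subset K ->
          ((H :&: L)%G, L) \in T)].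

Definition generates (G : {group gT}) (S T : {set arrow}) : Prop :=
  forall a : arrow, a \in T <->
    (forall T' : {set arrow}, is_transfer_system G T' -> S \subset T' -> a \in T').

Definition is_identity_arrow (a : arrow) : bool := a.1 == a.2.

Definition minimal_generating_set (G : {group gT}) (S T : {set arrow}) : Prop :=
  [/\ S \subset T,
      (forall a, a \in S -> ~~ is_identity_arrow a),
      generates G S T &
      (forall s, s \in S -> ~ generates G (S :\ s) T)].

Definition complete_ts (G : {group gT}) : {set arrow} :=
  [set a : arrow | (a.1 \subset a.2) && (a.2 \subset G)].

Definition meet_irreducible (G H : {group gT}) : bool :=
  [&& H \subset G, H != G &
   [forall A : {group gT}, forall B : {group gT},
     [&& A \subset G, B \subset G & (H :==: A :&: B)] ==> (H == A) || (H == B)]].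

Definition meet_irr_subgroups (G : {group gT}) : {set {group gT}} :=
  [set H : {group gT} | meet_irreducible G H].

Definition conj_class (G H : {group gT}) : {set {group gT}} :=
  [set (H :^ g)%G | g in G].

Definition meet_irr_classes (G : {group gT}) : {set {set {group gT}}} :=
  [set conj_class G H | H in meet_irr_subgroups G].

Definition is_mi_transversal (G : {group gT}) (R : {set {group gT}}) : Prop :=
  [/\ R \subset meet_irr_subgroups G,
      (forall H, H \in meet_irr_subgroups G -> exists2 I, I \in R & H \in conj_class G I) &
      (forall I J, I \in R -> J \in R -> J \in conj_class G I -> I = J)].

End TransferSystems.

(* Main.v *)
Require Import Defs.
From mathcomp Require Import all_boot all_fingroup.
From mathcomp Require Import zify.
Set Implicit Arguments. Unset Strict Implicit. Unset Printing Implicit Defensive.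
Local Open Scope group_scope.

Section Aux.
Variable gT : finGroupType.
Variable G : {group gT}.
Implicit Types H K L X Y I J : {group gT}.

Lemma sub_lt_aux (a b c n : nat) : b <= a -> c < b -> a - c < n.+1 -> a - b < n.
Proof. lia. Qed.

Lemma ts_sub (T : {set arrow gT}) H K :
  is_transfer_system G T -> (H, K) \in T -> (H \subset K) && (K \subset G).
Proof. by case=> h _ _ _ _ /h. Qed.

Lemma ts_eqin (T : {set arrow gT}) H K H' K' :
  (H, K) \in T -> gval H' = gval H -> gval K' = gval K -> (H', K') \in T.
Proof. by move=> hT /group_inj -> /group_inj ->. Qed.

Lemma complete_is_ts : is_transfer_system G (complete_ts G).
Proof.
split.
- by move=> a; rewrite inE.
- by move=> H sHG; rewrite inE /= subxx.
- move=> H K L; rewrite !inE /= => /andP[sHK sKG] /andP[sKL sLG].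
  by rewrite (subset_trans sHK sKL) sLG.
- move=> H K g Gg; rewrite !inE /= => /andP[sHK sKG].
  by rewrite conjSg sHK -(conjGid Gg) conjSg sKG.
- move=> H K L; rewrite !inE /= => /andP[sHK sKG] sLK.
  by rewrite subsetIr (subset_trans sLK sKG).
Qed.

Definition bad I (s : arrow gT) : bool :=
  [exists g in G, gval s.1 == I :^ g] && (gval s.1 \proper gval s.2).

Definition crit (S : {set arrow gT}) : Prop :=
  forall J, meet_irreducible G J -> [exists s in S, bad J s].

Lemma gen_completeP (S : {set arrow gT}) :
  S \subset complete_ts G ->
  generates G S (complete_ts G) <->
  (forall T', is_transfer_system G T' -> S \subset T' -> complete_ts G \subset T').
Proof.
move=> sS; split.
- move=> gen T' tsT' sST'; apply/subsetP => a /gen; exact.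
- move=> h a; split.
  + move=> ca T' tsT' sST'; exact: (subsetP (h T' tsT' sST')).
  + by move=> /(_ _ complete_is_ts sS).
Qed.

Lemma crit_suff (S : {set arrow gT}) T' :
  crit S -> is_transfer_system G T' -> S \subset T' -> complete_ts G \subset T'.
Proof.
move=> cS tsT sST.
have tsT' := tsT; case: tsT' => _ hid hcomp hconj hres.
suff hG : forall n H, H \subset G -> #|G| - #|H| < n -> (H, G) \in T'.
  apply/subsetP => -[H K]; rewrite inE /= => /andP[sHK sKG].
  have := hres _ _ _ (hG _ H (subset_trans sHK sKG) (leqnn _)) sKG.
  move/ts_eqin; apply => //=.
  by apply/esym/setIidPl.
elim=> [//|n IH] H sHG lt.
have [eHG|nHG] := eqVneq H G; first by rewrite eHG hid.
have [mI|nmI] := boolP (meet_irreducible G H).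
- have /existsP[[A B] /andP[sAB /andP[/exists_inP[g Gg /= /eqP eA] pAB]]] := cS H mI.
  have ABT : (A, B) \in T' := subsetP sST _ sAB.
  have /andP[_ sBG] := ts_sub tsT ABT.
  have hHB : (H, (B :^ g^-1)%G) \in T'.
    by apply: (ts_eqin (hconj _ _ g^-1 (groupVr Gg) ABT)) => //=; rewrite eA conjsgK.
  apply: hcomp hHB _; apply: IH.
    by rewrite /= -(conjGid (groupVr Gg)) conjSg.
  have : H \proper (B :^ g^-1)%G.
    by rewrite /= -[gval H](conjsgK g) -eA properJ.
  move/proper_card; rewrite /= cardJg.
  have := subset_leq_card sBG.
  by move=> a b; apply: (sub_lt_aux a b lt).
- move: nmI; rewrite /meet_irreducible sHG nHG /= => /forallPn[A /forallPn[B]].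
  rewrite negb_imply => /andP[/and3P[sAG sBG /eqP eH] /norP[nHA nHB]].
  have pHA : H \proper A.
    have sHA : H \subset A by rewrite eH subsetIl.
    rewrite properEneq sHA andbT; apply: contra nHA => /eqP e.
    by apply/eqP/group_inj.
  have pHB : H \proper B.
    have sHB : H \subset B by rewrite eH subsetIr.
    rewrite properEneq sHB andbT; apply: contra nHB => /eqP e.
    by apply/eqP/group_inj.
  have hA : (A, G) \in T'.
    exact: IH sAG (sub_lt_aux (subset_leq_card sAG) (proper_card pHA) lt).
  have hB : (B, G) \in T'.
    exact: IH sBG (sub_lt_aux (subset_leq_card sBG) (proper_card pHB) lt).
  have := hcomp _ _ _ (hres _ _ _ hA sBG) hB.
  by move/ts_eqin; apply.
Qed.


Section Excl.
Variable I : {group gT}.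
Hypothesis mI : meet_irreducible G I.

Definition ncj (X : {set gT}) := ~~ [exists g in G, X == I :^ g].

Definition TI : {set arrow gT} :=
  [set a : arrow gT | [&& gval a.1 \subset a.2, gval a.2 \subset G &
     [exists X : {group gT}, [&& gval X \subset G, ncj X & gval a.1 == a.2 :&: X]]]].

Lemma ncjG : ncj G.
Proof.
apply/exists_inP => -[g Gg /eqP e].
move: mI; rewrite /meet_irreducible => /and3P[sIG nIG _].
have eIG : gval I = gval G.
  apply/eqP; rewrite eqEcard sIG e cardJg leqnn.
  by [].
by rewrite (group_inj eIG) eqxx in nIG.
Qed.

Lemma TI_ts : is_transfer_system G TI.
Proof.
split.
- by move=> a; rewrite inE => /and3P[-> -> _].
- move=> H sHG; rewrite inE /= subxx sHG; apply/existsP; exists G.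
  by rewrite subxx ncjG /=; apply/eqP/esym/setIidPl.
- move=> H K L; rewrite !inE /= => /and3P[sHK sKG /existsP[X /and3P[sXG nX /eqP eH]]].
  move=> /and3P[sKL sLG /existsP[Y /and3P[sYG nY /eqP eK]]].
  rewrite (subset_trans sHK sKL) sLG; apply/existsP; exists (X :&: Y)%G.
  rewrite /= (subset_trans (subsetIl _ _) sXG) eH eK -setIA [Y :&: X]setIC eqxx !andbT.
  apply/exists_inP => -[g Gg /eqP e].
  have Gg' := groupVr Gg.
  have eI : gval I :==: (X :^ g^-1)%G :&: (Y :^ g^-1)%G.
    by rewrite /= -conjIg e conjsgK.
  have sXG' : (X :^ g^-1)%G \subset G by rewrite /= -(conjGid Gg') conjSg.
  have sYG' : (Y :^ g^-1)%G \subset G by rewrite /= -(conjGid Gg') conjSg.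
  move: mI => /and3P[_ _ /forallP/(_ (X :^ g^-1)%G)/forallP/(_ (Y :^ g^-1)%G)].
  rewrite sXG' sYG' eI /= => /orP[] /eqP eI'.
  + move/exists_inP: nX; apply; exists g => //.
    by rewrite eI' conjsgKV.
  + move/exists_inP: nY; apply; exists g => //.
    by rewrite eI' conjsgKV.
- move=> H K h Gh; rewrite !inE /= => /and3P[sHK sKG /existsP[X /and3P[sXG nX /eqP eH]]].
  have sJG : forall Z : {set gT}, Z \subset G -> Z :^ h \subset G.
    by move=> Z sZ; rewrite -(conjGid Gh) conjSg.
  rewrite conjSg sHK sJG //; apply/existsP; exists (X :^ h)%G.
  rewrite /= sJG // eH conjIg eqxx !andbT.
  apply/exists_inP => -[g Gg /eqP e].
  move/exists_inP: nX; apply; exists (g * h^-1); first by rewrite groupM ?groupV.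
  by rewrite conjsgM -e conjsgK.
- move=> H K L; rewrite !inE /= => /and3P[sHK sKG /existsP[X /and3P[sXG nX /eqP eH]]] sLK.
  rewrite subsetIr (subset_trans sLK sKG); apply/existsP; exists X.
  rewrite sXG nX eH /= -setIA setIC -setIA (setIidPl sLK) setIC.
  by [].
Qed.

Lemma I_notin_TI : (I, G) \notin TI.
Proof.
rewrite inE /=; apply/negP => /and3P[_ _ /existsP[X /and3P[sXG nX /eqP eI]]].
move/exists_inP: nX; apply; exists 1; first exact: group1.
by rewrite conjsg1 eI (setIidPr sXG).
Qed.

End Excl.

Lemma crit_nec (S : {set arrow gT}) :
  S \subset complete_ts G -> generates G S (complete_ts G) -> crit S.
Proof.
move=> sS /(gen_completeP sS) gen J mJ.
have [//|nb] := boolP [exists s in S, bad J s].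
have sST : S \subset TI J.
  apply/subsetP => -[H K] sHK.
  have := subsetP sS _ sHK; rewrite !inE /= => /andP[sHK' sKG].
  rewrite sHK' sKG /=.
  move/existsPn: nb => /(_ (H, K)); rewrite sHK /= /bad /=.
  have [ex|nex] := boolP [exists g in G, gval H == J :^ g] => /= np.
  + apply/existsP; exists G; rewrite subxx ncjG //=.
    rewrite (setIidPl sKG); move: np; rewrite properEneq sHK' andbT negbK.
    by [].
  + apply/existsP; exists H; rewrite (subset_trans sHK' sKG) /ncj nex /=.
    by rewrite (setIidPr sHK').
have := subsetP (gen _ (TI_ts mJ) sST) (J, G).
rewrite inE /= subxx.
move: mJ => /and3P[sJG _ _]; rewrite sJG => /(_ isT).
by move/negP: (I_notin_TI J).
Qed.


Lemma conj_class_eq H I g :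
  g \in G -> gval H = I :^ g -> conj_class G H = conj_class G I.
Proof.
move=> Gg eH; apply/setP => X; apply/imsetP/imsetP => -[h Gh ->].
- exists (g * h); first by rewrite groupM.
  by apply: group_inj; rewrite /= eH conjsgM.
- exists (g^-1 * h); first by rewrite groupM ?groupV.
  by apply: group_inj; rewrite /= eH conjsgM conjsgK.
Qed.

Lemma crit_sub (S : {set arrow gT}) :
  S \subset complete_ts G -> crit S -> generates G S (complete_ts G).
Proof.
move=> sS cS; apply/(gen_completeP sS) => T' tsT sST.
exact: crit_suff cS tsT sST.
Qed.

End Aux.

Unset Implicit Arguments.

Theorem proposition4p5 (gT : finGroupType) (G : {group gT}) :
  (forall S : {set arrow gT}, minimal_generating_set G S (complete_ts G) ->
     #|S| = #|meet_irr_classes G|) /\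
  (forall R : {set {group gT}}, is_mi_transversal G R ->
     minimal_generating_set G [set (I, G) | I in R] (complete_ts G)).
Proof.
split.
- move=> S [sS _ gen minl].
  have cS := crit_nec sS gen.
  have sSD : forall s, S :\ s \subset complete_ts G.
    by move=> s; apply: subset_trans sS; apply: subsetDl.
  have fA : forall s, s \in S ->
      exists2 I : {group gT}, meet_irreducible G I & bad G I s.
    move=> s sin.
    have [/existsP[I /andP[mI bI]]|nex] :=
      boolP [exists I : {group gT}, meet_irreducible G I && bad G I s].
      by exists I.
    exfalso; apply: (minl s sin); apply: crit_sub (sSD s) _.
    move=> J mJ; have /exists_inP[t tS bt] := cS J mJ.
    apply/exists_inP; exists t => //.
    rewrite in_setD1 tS andbT; apply: contraNneq nex => ets.
    by apply/existsP; exists J; rewrite mJ -ets.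
  have clsI : forall s I, bad G I s -> conj_class G s.1 = conj_class G I.
    by move=> s I /andP[/exists_inP[g Gg /eqP e] _]; apply: conj_class_eq Gg e.
  have eqS : [set conj_class G s.1 | s in S] = meet_irr_classes G.
    apply/setP => c; apply/imsetP/imsetP.
    + move=> [s sin ->]; have [I mI bI] := fA s sin.
      by exists I; rewrite ?inE // (clsI _ _ bI).
    + move=> [I]; rewrite inE => mI ->.
      have /exists_inP[s sin bI] := cS I mI.
      by exists s => //; rewrite (clsI _ _ bI).
  rewrite -eqS card_in_imset //.
  move=> s s' sin s'in /= ecl.
  apply/eqP/negPn/negP => nss.
  apply: (minl s sin); apply: crit_sub (sSD s) _.
  move=> J mJ; have /exists_inP[t tS bt] := cS J mJ.
  apply/exists_inP.
  have [ets|nts] := eqVneq t s; last by exists t; rewrite // in_setD1 nts tS.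
  exists s'; first by rewrite in_setD1 s'in eq_sym nss.
  have [I' _ /andP[_ ps']] := fA s' s'in.
  rewrite /bad ps' andbT.
  move: bt; rewrite ets => /andP[/exists_inP[k Gk /eqP ek] _].
  have : s'.1 \in conj_class G s'.1.
    by apply/imsetP; exists 1; rewrite ?group1 //; apply: group_inj; rewrite /= conjsg1.
  rewrite -ecl => /imsetP[h Gh ->].
  apply/exists_inP; exists (k * h); first by rewrite groupM.
  by rewrite /= ek conjsgM.
- move=> R [sR covR uniqR].
  have mIR : forall I, I \in R -> meet_irreducible G I.
    by move=> I /(subsetP sR); rewrite inE.
  have sS : forall S : {set arrow gT}, S \subset [set (I, G) | I in R] -> S \subset complete_ts G.
    move=> S sS'; apply/subsetP => a /(subsetP sS') /imsetP[I IR ->].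
    by rewrite inE /= subxx andbT; case/and3P: (mIR I IR).
  split.
  + exact: sS.
  + move=> a /imsetP[I IR ->]; rewrite /is_identity_arrow /=.
    by case/and3P: (mIR I IR).
  + apply: crit_sub (sS _ (subxx _)) _ => J mJ.
    have JM : J \in meet_irr_subgroups G by rewrite inE.
    have [I IR /imsetP[g Gg eJ]] := covR J JM.
    apply/exists_inP; exists (I, G); first by apply/imsetP; exists I.
    rewrite /bad /=; apply/andP; split.
      apply/exists_inP; exists g^-1; first by rewrite groupV.
      by rewrite eJ /= conjsgK.
    case/and3P: (mIR I IR) => sIG nIG _.
    rewrite properEneq sIG andbT; apply: contra nIG => /eqP e.
    by apply/eqP/group_inj.
  + move=> s /imsetP[I IR ->] gen.
    have := crit_nec (sS _ (subsetDl _ _)) gen (mIR I IR).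
    move=> /exists_inP[t]; rewrite in_setD1 => /andP[nts /imsetP[J JR et]].
    rewrite et => /andP[/exists_inP[g Gg /eqP eJ] _].
    have JI : J \in conj_class G I.
      by apply/imsetP; exists g => //; apply: group_inj.
    by move/eqP: nts; rewrite et (uniqR _ _ IR JR JI).
Qed.
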